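(* Let $p$ be a prime and $X$ a countably infinite set. Then the ring $\mathcal{B}_{(1)}(\mathbb{Q}_p(X))$ is an infinite sum ring. In particular, $K_0(\mathcal{B}_{(1)}(\mathbb{Q}_p(X)))=0$.
   Context: $\mathbb{Q}_p(X)$ is the set of maps $\xi:X\to\mathbb{Q}_p$ with $|\xi(i)|_p\le1$ for all but finitely many $i$, a $\mathbb{Z}_p$-module under coordinatewise operations, with the topology $\tau$ in which $A\subseteq\mathbb{Q}_p(X)$ is open iff for every finite $P\subseteq X$ the set $A\cap\big(\prod_{i\in P}\mathbb{Q}_p\times\prod_{j\in X\setminus P}\mathbb{Z}_p\big)$ is open in the product topology. $\mathcal{B}(\mathbb{Q}_p(X))$ is the ring of $\tau$-continuous $\mathbb{Z}_p$-linear maps, normed by $\|T\|=\sup_{\|\xi\|\le1}\|T\xi\|$ with $\|\xi\|=\max_i|\xi(i)|_p$, and $\mathcal{B}_{(1)}(\mathbb{Q}_p(X))$ is the subring of operators of norm at most $1$. A sum ring is a unital ring $R$ with elements $a_0,b_0,a_1,b_1$ such that $a_0b_0=a_1b_1=1$ and $b_0a_0+b_1a_1=1$; then $x\boxplus y:=b_0xa_0+b_1ya_1$ defines a unital ring homomorphism $R\times R\to R$. An infinite sum ring is a sum ring with a unital ring homomorphism $R\to R$, $a\mapsto a^\infty$, such that $a\boxplus a^\infty=a^\infty$ for all $a\in R$. *)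

(* Defs.v *)
From mathcomp Require Import all_boot all_order all_algebra.
Set Implicit Arguments. Unset Strict Implicit. Unset Printing Implicit Defensive.

Section Padic.
Variable p : nat.

Definition digit := 'I_p.-1.+1.
(* x = \sum_i x i * p^i *)
Definition Zp := nat -> digit.

Definition zval (n : nat) (x : Zp) : nat := \sum_(i < n) (x i : nat) * p ^ i.

(* the p-adic integer whose residue mod p^n is (f n mod p^n), for any
   coherent family f (f (n.+1) = f n mod p^n) *)
Definition zp_of_res (f : nat -> nat) : Zp :=
  fun i => inord ((f i.+1 %/ p ^ i) %% p).

Definition zp0 : Zp := fun _ => ord0.
Definition zp1 : Zp := zp_of_res (fun _ => 1%N).
Definition zp_add (x y : Zp) : Zp := zp_of_res (fun n => zval n x + zval n y)%N.
Definition zp_mul (x y : Zp) : Zp := zp_of_res (fun n => zval n x * zval n y)%N.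
Definition zp_opp (x : Zp) : Zp := zp_of_res (fun n => p ^ n - zval n x)%N.
Definition zp_pmul (j : nat) (x : Zp) : Zp := zp_of_res (fun n => p ^ j * zval n x)%N.
(* division by p^j (meaningful when the first j digits vanish) *)
Definition zp_shift (j : nat) (x : Zp) : Zp := fun i => x (i + j)%N.

(* ---------- Q_p: x = z / p^k in lowest terms ---------- *)
Record Qp := MkQp {
  qk : nat;
  qz : Zp;
  qok : (qk == 0%N) || (qz 0%N != ord0) }.

Definition lowdeg (k : nat) (z : Zp) : nat :=
  find (fun i => z i != ord0) (iota 0 k).

Lemma normalize_ok (k : nat) (z : Zp) :
  ((k - lowdeg k z)%N == 0%N) || (zp_shift (lowdeg k z) z 0%N != ord0).
Proof.
rewrite /zp_shift add0n /lowdeg.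
have := find_size (fun i => z i != ord0) (iota 0 k); rewrite size_iota.
rewrite leq_eqVlt => /orP [/eqP -> | lt]; first by rewrite subnn.
apply/orP; right.
have := nth_find 0%N (a := fun i => z i != ord0) (s := iota 0 k).
rewrite has_find size_iota => /(_ lt).
by rewrite nth_iota // add0n.
Qed.

Definition normalize (k : nat) (z : Zp) : Qp :=
  @MkQp (k - lowdeg k z)%N (zp_shift (lowdeg k z) z) (normalize_ok k z).

Definition q0 : Qp := normalize 0 zp0.
Definition qadd (x y : Qp) : Qp :=
  let K := maxn (qk x) (qk y) in
  normalize K (zp_add (zp_pmul (K - qk x) (qz x)) (zp_pmul (K - qk y) (qz y))).
Definition qopp (x : Qp) : Qp := normalize (qk x) (zp_opp (qz x)).
Definition qmul (x y : Qp) : Qp := normalize (qk x + qk y) (zp_mul (qz x) (qz y)).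
Definition qscale (a : Zp) (x : Qp) : Qp := normalize (qk x) (zp_mul a (qz x)).

Definition inZp (x : Qp) : bool := qk x == 0%N.
Definition in_pnZp (n : nat) (x : Qp) : bool :=
  (qk x == 0%N) && [forall i : 'I_n, qz x i == ord0].

Lemma inZp_normalize0 z : inZp (normalize 0 z).
Proof. by rewrite /inZp /= sub0n. Qed.

Lemma inZp_qadd x y : inZp x -> inZp y -> inZp (qadd x y).
Proof.
rewrite /qadd /inZp => /eqP hx /eqP hy; rewrite hx hy maxnn.
by rewrite /= sub0n.
Qed.
Lemma inZp_qopp x : inZp x -> inZp (qopp x).
Proof. by rewrite /inZp /qopp => /eqP ->; rewrite /= sub0n. Qed.
Lemma inZp_qscale a x : inZp x -> inZp (qscale a x).
Proof. by rewrite /inZp /qscale => /eqP ->; rewrite /= sub0n. Qed.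

Variable X : eqType.

Definition isQpX (xi : X -> Qp) : Prop :=
  exists s : seq X, forall i, ~~ inZp (xi i) -> i \in s.

Definition QpX := {xi : X -> Qp | isQpX xi}.

Lemma isQpX_add (xi eta : QpX) : isQpX (fun i => qadd (sval xi i) (sval eta i)).
Proof.
case: xi => xi [s hs]; case: eta => eta [t ht]; exists (s ++ t) => i /= h.
rewrite mem_cat; apply/orP; case: (boolP (inZp (xi i))) => hx; last by left; apply: hs.
case: (boolP (inZp (eta i))) => hy; last by right; apply: ht.
by move: h; rewrite inZp_qadd.
Qed.
Lemma isQpX_opp (xi : QpX) : isQpX (fun i => qopp (sval xi i)).
Proof.
case: xi => xi [s hs]; exists s => i /= h; apply: hs; apply/negP => hx.
by move: h; rewrite inZp_qopp.
Qed.
Lemma isQpX_scale a (xi : QpX) : isQpX (fun i => qscale a (sval xi i)).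
Proof.
case: xi => xi [s hs]; exists s => i /= h; apply: hs; apply/negP => hx.
by move: h; rewrite inZp_qscale.
Qed.
Lemma isQpX_0 : isQpX (fun _ => q0).
Proof. by exists [::] => i; rewrite inZp_normalize0. Qed.

Definition vadd (xi eta : QpX) : QpX := exist _ _ (isQpX_add xi eta).
Definition vopp (xi : QpX) : QpX := exist _ _ (isQpX_opp xi).
Definition vscale (a : Zp) (xi : QpX) : QpX := exist _ _ (isQpX_scale a xi).
Definition v0 : QpX := exist _ _ isQpX_0.

Definition vnorm_le1 (xi : QpX) : Prop := forall i, inZp (sval xi i).

(* xi \in E_P = prod_{i in P} Q_p x prod_{j notin P} Z_p, for finite P = s *)
Definition inEP (s : seq X) (xi : QpX) : Prop :=
  forall j, j \notin s -> inZp (sval xi j).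

(* A \cap E_P is open in the product topology of E_P: around each of its
   points it contains a basic open set of E_P, i.e. one obtained by
   prescribing finitely many coordinates up to p^n Z_p *)
Definition open_in_EP (s : seq X) (A : QpX -> Prop) : Prop :=
  forall xi, inEP s xi -> A xi ->
    exists (F : seq X) (n : nat), forall eta, inEP s eta ->
      (forall i, i \in F -> in_pnZp n (qadd (sval eta i) (qopp (sval xi i)))) ->
      A eta.

Definition tau_open (A : QpX -> Prop) : Prop :=
  forall s : seq X, open_in_EP s A.

Definition tau_continuous (T : QpX -> QpX) : Prop :=
  forall A, tau_open A -> tau_open (fun xi => A (T xi)).

Definition Zp_linear (T : QpX -> QpX) : Prop :=
  (forall xi eta, T (vadd xi eta) = vadd (T xi) (T eta)) /\
  (forall a xi, T (vscale a xi) = vscale a (T xi)).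

Definition inB (T : QpX -> QpX) : Prop := Zp_linear T /\ tau_continuous T.

Definition opnorm_le1 (T : QpX -> QpX) : Prop :=
  forall xi, vnorm_le1 xi -> vnorm_le1 (T xi).

Definition inB1 (T : QpX -> QpX) : Prop := inB T /\ opnorm_le1 T.

Definition opadd (T S : QpX -> QpX) : QpX -> QpX := fun xi => vadd (T xi) (S xi).
Definition op0 : QpX -> QpX := fun _ => v0.
Definition opmul (T S : QpX -> QpX) : QpX -> QpX := fun xi => T (S xi).
Definition op1 : QpX -> QpX := id.

Definition boxplus (a0 b0 a1 b1 x y : QpX -> QpX) : QpX -> QpX :=
  opadd (opmul b0 (opmul x a0)) (opmul b1 (opmul y a1)).

Definition B1_infinite_sum_ring : Prop :=
  exists a0 b0 a1 b1 : QpX -> QpX,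
    [/\ inB1 a0, inB1 b0, inB1 a1 & inB1 b1] /\
    [/\ opmul a0 b0 = op1, opmul a1 b1 = op1 &
        opadd (opmul b0 a0) (opmul b1 a1) = op1] /\
    exists inf : (QpX -> QpX) -> (QpX -> QpX),
      (forall a, inB1 a -> inB1 (inf a)) /\
      inf op1 = op1 /\
      (forall a b, inB1 a -> inB1 b -> inf (opadd a b) = opadd (inf a) (inf b)) /\
      (forall a b, inB1 a -> inB1 b -> inf (opmul a b) = opmul (inf a) (inf b)) /\
      (forall a, inB1 a -> boxplus a0 b0 a1 b1 a (inf a) = inf a).

Definition opmx (m n : nat) := 'M[QpX -> QpX]_(m, n).

Definition mx_inB1 m n (A : opmx m n) : Prop := forall i j, inB1 (A i j).

Definition mx_mul m n k (A : opmx m n) (B : opmx n k) : opmx m k :=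
  (\matrix_(i, j) foldr opadd op0 [seq opmul (A i l) (B l j) | l <- enum 'I_n])%R.

Definition mx_idem n (e : opmx n n) : Prop := mx_mul e e = e.

(* Murray--von Neumann (algebraic) equivalence of idempotent matrices,
   i.e. isomorphism of the corresponding f.g. projective modules *)
Definition mx_equiv n m (e : opmx n n) (f : opmx m m) : Prop :=
  exists (a : opmx n m) (b : opmx m n),
    mx_inB1 a /\ mx_inB1 b /\ mx_mul a b = e /\ mx_mul b a = f.

Definition mx_dsum n k (e : opmx n n) (g : opmx k k) : opmx (n + k) (n + k) :=
  block_mx e (const_mx op0) (const_mx op0) g.

(* K_0(B_(1)) = 0: any two classes [e], [f] of the Grothendieck group
   coincide, i.e. e (+) g ~ f (+) g for some idempotent g *)
Definition B1_K0_trivial : Prop :=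
  forall n m (e : opmx n n) (f : opmx m m),
    mx_inB1 e -> mx_idem e -> mx_inB1 f -> mx_idem f ->
    exists k (g : opmx k k), mx_inB1 g /\ mx_idem g /\
      mx_equiv (mx_dsum e g) (mx_dsum f g).

End Padic.

(* Main.v *)
From HB Require Import structures.
Require Import Defs.
From mathcomp Require Import all_boot all_order all_algebra.
From mathcomp Require Import boolp.
From mathcomp Require Import zify ring.
From Stdlib Require Cantor.
Set Implicit Arguments. Unset Strict Implicit. Unset Printing Implicit Defensive.

Section K0Generic.
Import GRing.Theory.
Local Open Scope ring_scope.
Variable R : pzRingType.
Variable good : R -> Prop.
Hypothesis good0 : good 0.
Hypothesis good1 : good 1.
Hypothesis good_add : forall x y, good x -> good y -> good (x + y).
Hypothesis good_mul : forall x y, good x -> good y -> good (x * y).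
Variables la0 lb0 la1 lb1 : R.
Hypothesis ga0 : good la0.
Hypothesis gb0 : good lb0.
Hypothesis ga1 : good la1.
Hypothesis gb1 : good lb1.
Hypothesis h00 : la0 * lb0 = 1.
Hypothesis h11 : la1 * lb1 = 1.
Hypothesis h01 : la0 * lb1 = 0.
Hypothesis h10 : la1 * lb0 = 0.
Variable linf : R -> R.
Hypothesis ginf : forall x, good x -> good (linf x).
Hypothesis linf0 : linf 0 = 0.
Hypothesis linfD : forall x y, good x -> good y -> linf (x + y) = linf x + linf y.
Hypothesis linfM : forall x y, good x -> good y -> linf (x * y) = linf x * linf y.
Hypothesis linf_box : forall x, good x -> lb0 * (x * la0) + lb1 * (linf x * la1) = linf x.

Definition allgood m n (A : 'M[R]_(m, n)) := forall i j, good (A i j).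

Lemma good_sum (I : Type) (r : seq I) (F : I -> R) :
  (forall i, good (F i)) -> good (\sum_(i <- r) F i).
Proof. by move=> h; elim/big_ind: _ => //. Qed.

Lemma allgood_mul m n k (A : 'M[R]_(m, n)) (B : 'M[R]_(n, k)) :
  allgood A -> allgood B -> allgood (A *m B).
Proof. by move=> hA hB i j; rewrite mxE; apply: good_sum => l; apply: good_mul. Qed.

Lemma allgood0 m n : allgood (0 : 'M[R]_(m, n)).
Proof. by move=> i j; rewrite mxE. Qed.

Lemma allgood_col m1 m2 n (A : 'M[R]_(m1, n)) (B : 'M[R]_(m2, n)) :
  allgood A -> allgood B -> allgood (col_mx A B).
Proof. by move=> hA hB i j; rewrite mxE; case: split => k; [exact: hA | exact: hB]. Qed.

Lemma allgood_row m n1 n2 (A : 'M[R]_(m, n1)) (B : 'M[R]_(m, n2)) :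
  allgood A -> allgood B -> allgood (row_mx A B).
Proof. by move=> hA hB i j; rewrite mxE; case: split => k; [exact: hA | exact: hB]. Qed.

Lemma allgood_block m1 m2 n1 n2 (A : 'M[R]_(m1, n1)) (B : 'M[R]_(m1, n2))
  (C : 'M[R]_(m2, n1)) (D : 'M[R]_(m2, n2)) :
  allgood A -> allgood B -> allgood C -> allgood D -> allgood (block_mx A B C D).
Proof. by move=> hA hB hC hD; apply: allgood_col; apply: allgood_row. Qed.

Lemma allgood_scalar n a : good a -> allgood (a%:M : 'M[R]_n).
Proof. by move=> ha i j; rewrite mxE; case: (i == j); rewrite ?mulr1n ?mulr0n. Qed.

Definition dsum m n (x : 'M[R]_m) (y : 'M[R]_n) : 'M[R]_(m + n) := block_mx x 0 0 y.
Definition idem n (x : 'M[R]_n) := x *m x = x.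
Definition eqv m n (P : 'M[R]_m) (Q : 'M[R]_n) :=
  exists (a : 'M[R]_(m, n)) (b : 'M[R]_(n, m)),
    [/\ allgood a, allgood b, a *m b = P & b *m a = Q].

Lemma idem_dsum m n (x : 'M[R]_m) (y : 'M[R]_n) : idem x -> idem y -> idem (dsum x y).
Proof.
rewrite /idem /dsum => hx hy.
by rewrite mulmx_block !mulmx0 !mul0mx !addr0 !add0r hx hy.
Qed.

Lemma allgood_dsum m n (x : 'M[R]_m) (y : 'M[R]_n) :
  allgood x -> allgood y -> allgood (dsum x y).
Proof. by move=> hx hy; apply: allgood_block => //; apply: allgood0. Qed.

Lemma eqv_sym m n (P : 'M[R]_m) (Q : 'M[R]_n) : eqv P Q -> eqv Q P.
Proof. by case=> a [b [ha hb e1 e2]]; exists b, a. Qed.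

Lemma eqv_trans m n k (P : 'M[R]_m) (Q : 'M[R]_n) (S : 'M[R]_k) :
  idem P -> idem S -> eqv P Q -> eqv Q S -> eqv P S.
Proof.
move=> hP hS [a1 [b1 [ga1' gb1' e1 e2]]] [a2 [b2 [ga2 gb2 e3 e4]]].
exists (a1 *m a2), (b2 *m b1); split; try by apply: allgood_mul.
  by rewrite mulmxA -(mulmxA a1) e3 -e2 !mulmxA e1 -mulmxA e1 hP.
by rewrite mulmxA -(mulmxA b2) e2 -e3 !mulmxA e4 -mulmxA e4 hS.
Qed.

Lemma eqv_dsum_l m n k (z : 'M[R]_k) (x : 'M[R]_m) (y : 'M[R]_n) :
  idem z -> allgood z -> eqv x y -> eqv (dsum z x) (dsum z y).
Proof.
move=> hz gz [a [b [ga gb e1 e2]]].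
exists (block_mx z 0 0 a), (block_mx z 0 0 b); split.
- by apply: allgood_block => //; apply: allgood0.
- by apply: allgood_block => //; apply: allgood0.
- by rewrite mulmx_block !mulmx0 !mul0mx !addr0 !add0r hz e1.
- by rewrite mulmx_block !mulmx0 !mul0mx !addr0 !add0r hz e2.
Qed.

Lemma eqv_swap m n (x : 'M[R]_m) (z : 'M[R]_n) :
  idem x -> idem z -> allgood x -> allgood z -> eqv (dsum x z) (dsum z x).
Proof.
move=> hx hz gx gz.
exists (block_mx 0 x z 0), (block_mx 0 z x 0); split.
- by apply: allgood_block => //; apply: allgood0.
- by apply: allgood_block => //; apply: allgood0.
- by rewrite mulmx_block !mulmx0 !mul0mx !addr0 !add0r hx hz.
- by rewrite mulmx_block !mulmx0 !mul0mx !addr0 !add0r hx hz.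
Qed.

Local Notation sc n a := (a%:M : 'M[R]_n).

Definition bx n (x y : 'M[R]_n) := sc n lb0 *m x *m sc n la0 + sc n lb1 *m y *m sc n la1.

Lemma eqv_box n m (x y : 'M[R]_n) (z : 'M[R]_m) :
  idem x -> idem y -> idem z -> allgood x -> allgood y -> allgood z ->
  eqv (dsum x (dsum y z)) (dsum (bx x y) z).
Proof.
move=> hx hy hz gx gy gz.
have s00 : sc n la0 *m sc n lb0 = 1%:M by rewrite -scalar_mxM h00.
have s11 : sc n la1 *m sc n lb1 = 1%:M by rewrite -scalar_mxM h11.
have s01 : sc n la0 *m sc n lb1 = 0 by rewrite -scalar_mxM h01 raddf0.
have s10 : sc n la1 *m sc n lb0 = 0 by rewrite -scalar_mxM h10 raddf0.
exists (col_mx (row_mx (x *m sc n la0) (0 : 'M_(n, m)))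
               (block_mx (y *m sc n la1) 0 0 z)).
exists (row_mx (col_mx (sc n lb0 *m x) (0 : 'M_(m, n)))
               (block_mx (sc n lb1 *m y) 0 0 z)).
split.
- apply: allgood_col; first apply: allgood_row.
  + by apply: allgood_mul => //; apply: allgood_scalar.
  + exact: allgood0.
  + by apply: allgood_block => //; try apply: allgood0; apply: allgood_mul => //; apply: allgood_scalar.
- apply: allgood_row; first apply: allgood_col.
  + by apply: allgood_mul => //; apply: allgood_scalar.
  + exact: allgood0.
  + by apply: allgood_block => //; try apply: allgood0; apply: allgood_mul => //; apply: allgood_scalar.
- rewrite mul_col_row mul_row_col mul_row_block mul_block_col mulmx_block.
  rewrite !mulmx0 !mul0mx !addr0 !add0r.
  rewrite !mulmxA -!(mulmxA x) -!(mulmxA y) s00 s01 s10 s11.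
  by rewrite !mul1mx !mul0mx !mulmx0 hx hy hz row_mx0 col_mx0.
- rewrite mul_row_col mul_col_row mulmx_block.
  rewrite !mulmx0 !mul0mx !addr0 !add0r add_block_mx !addr0 !add0r hz.
  rewrite /bx !mulmxA -(mulmxA _ x x) hx -(mulmxA _ y y) hy.
  by [].
Qed.

Definition minf n (x : 'M[R]_n) : 'M[R]_n := map_mx linf x.

Lemma allgood_minf n (x : 'M[R]_n) : allgood x -> allgood (minf x).
Proof. by move=> gx i j; rewrite mxE; apply: ginf. Qed.

Lemma linf_sum (I : Type) (r : seq I) (F : I -> R) :
  (forall i, good (F i)) -> linf (\sum_(i <- r) F i) = \sum_(i <- r) linf (F i).
Proof.
move=> h; elim: r => [|i r IH]; first by rewrite !big_nil.
by rewrite !big_cons linfD // ?IH //; apply: good_sum.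
Qed.

Lemma idem_minf n (x : 'M[R]_n) : allgood x -> idem x -> idem (minf x).
Proof.
move=> gx hx; apply/matrixP => i j.
rewrite [RHS]mxE -[in RHS]hx [in RHS]mxE linf_sum => [|l]; last exact: good_mul.
by rewrite mxE; apply: eq_bigr => l _; rewrite !mxE linfM.
Qed.

Lemma mul_scl n m a (A : 'M[R]_(n, m)) : a%:M *m A = \matrix_(i, j) (a * A i j).
Proof. by rewrite mul_scalar_mx; apply/matrixP => i j; rewrite !mxE. Qed.

Lemma mul_scr n m a (A : 'M[R]_(n, m)) : A *m a%:M = \matrix_(i, j) (A i j * a).
Proof.
apply/matrixP => i j; rewrite !mxE (bigD1 j) //= mxE eqxx mulr1n big1 ?addr0 // => k hk.
by rewrite mxE (negbTE hk) mulr0n mulr0.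
Qed.

Lemma bx_minf n (x : 'M[R]_n) : allgood x -> bx x (minf x) = minf x.
Proof.
move=> gx; apply/matrixP => i j.
rewrite /bx !mul_scl !mul_scr !mxE -!mulrA; exact: linf_box.

Qed.

Theorem K0_generic n m (e : 'M[R]_n) (f : 'M[R]_m) :
  allgood e -> idem e -> allgood f -> idem f ->
  exists k (G : 'M[R]_k), [/\ allgood G, idem G & eqv (dsum e G) (dsum f G)].
Proof.
move=> ge he gf hf.
have gE := allgood_minf ge; have hE := idem_minf ge he.
have gF := allgood_minf gf; have hF := idem_minf gf hf.
exists (n + m), (dsum (minf e) (minf f)); split.
- exact: allgood_dsum.
- exact: idem_dsum.
have S1 : eqv (dsum e (dsum (minf e) (minf f))) (dsum (minf e) (minf f)).
  by have := eqv_box he hE hF ge gE gF; rewrite bx_minf.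
have S2 : eqv (dsum f (dsum (minf f) (minf e))) (dsum (minf f) (minf e)).
  by have := eqv_box hf hF hE gf gF gE; rewrite bx_minf.
have S3 := eqv_dsum_l hf gf (eqv_swap hE hF gE gF).
have S4 := eqv_swap hF hE gF gE.
have iEF := idem_dsum hE hF.
have ifFE := idem_dsum hf (idem_dsum hF hE).
have ifEF := idem_dsum hf iEF.
have ieEF := idem_dsum he iEF.
have T1 := eqv_trans iEF ifFE (eqv_sym S4) (eqv_sym S2).
have T2 := eqv_trans iEF ifEF T1 (eqv_sym S3).
exact: eqv_trans ieEF ifEF S1 T2.
Qed.

End K0Generic.

Section Main.
Variable p : nat.
Hypothesis p_gt1 : (1 < p)%N.
Variable X : eqType.

Lemma p_gt0 : (0 < p)%N. Proof. exact: ltnW. Qed.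
Lemma expp_gt0 n : (0 < p ^ n)%N. Proof. by rewrite expn_gt0 p_gt0. Qed.

Lemma digit_lt (d : digit p) : (d < p)%N.
Proof. by case: d => /= m; rewrite prednK // p_gt0. Qed.

Lemma zvalS n (x : Defs.Zp p) : zval n.+1 x = (zval n x + x n * p ^ n)%N.
Proof. by rewrite /zval big_ord_recr. Qed.

Lemma zval0n (x : Defs.Zp p) : zval 0 x = 0%N.
Proof. by rewrite /zval big_ord0. Qed.

Lemma zval_lt n (x : Defs.Zp p) : (zval n x < p ^ n)%N.
Proof.
elim: n => [|n IH]; first by rewrite zval0n expn0.
rewrite zvalS expnS; have h := digit_lt (x n).
have hP := expp_gt0 n.
move: IH h hP; set P := p ^ n; set z := zval n x; set d := (x n : nat) => IH h hP.
nia.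
Qed.

Lemma zval_mod n m (x : Defs.Zp p) : (n <= m)%N -> zval m x %% p ^ n = zval n x.
Proof.
elim: m => [|m IH]; first by rewrite leqn0 => /eqP ->; rewrite zval0n.
rewrite leq_eqVlt => /orP [/eqP -> | ]; first by rewrite modn_small // zval_lt.
rewrite ltnS => hnm; rewrite zvalS -modnDm -(subnK hnm) expnD mulnA modnMl addn0.
by rewrite modn_mod subnK // IH.
Qed.

Lemma zval_ext (x y : Defs.Zp p) : (forall n, zval n x = zval n y) -> x = y.
Proof.
move=> H; apply: funext => i; apply: val_inj => /=.
have := H i.+1; rewrite !zvalS H => /addnI /eqP.
by rewrite eqn_pmul2r ?expp_gt0 // => /eqP.
Qed.

Lemma mod_step m P q : m %% (q * P) = (m %% P + (m %/ P %% q) * P)%N.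
Proof.
rewrite modn_divl; set r := m %% (q * P).
have -> : m %% P = r %% P by rewrite /r modn_dvdm // dvdn_mull.
by rewrite addnC -divn_eq.
Qed.

Lemma zval_of_res (f : nat -> nat) :
  (forall n, f n.+1 = f n %[mod p ^ n]) ->
  forall n, zval n (zp_of_res p f) = f n %% p ^ n.
Proof.
move=> H; elim=> [|n IH]; first by rewrite zval0n expn0 modn1.
rewrite zvalS IH /zp_of_res inordK; last by rewrite prednK ?p_gt0 // ltn_pmod // p_gt0.
by rewrite -H expnS mod_step; congr (_ + _); apply: mulnC.
Qed.

Lemma zval_add n (x y : Defs.Zp p) : zval n (zp_add x y) = (zval n x + zval n y) %% p ^ n.
Proof.
rewrite zval_of_res // => m.
by rewrite -[LHS]modnDm -[RHS]modnDm !zval_mod.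
Qed.

Lemma zval_mul n (x y : Defs.Zp p) : zval n (zp_mul x y) = (zval n x * zval n y) %% p ^ n.
Proof.
rewrite zval_of_res // => m.
by rewrite -[LHS]modnMm -[RHS]modnMm !zval_mod.
Qed.

Lemma zval_pmul j n (x : Defs.Zp p) : zval n (zp_pmul j x) = (p ^ j * zval n x) %% p ^ n.
Proof.
rewrite zval_of_res // => m.
by rewrite -[LHS]modnMmr -[RHS]modnMmr !zval_mod.
Qed.

Lemma zval_opp n (x : Defs.Zp p) : zval n (zp_opp x) = (p ^ n - zval n x) %% p ^ n.
Proof.
rewrite zval_of_res // => m; apply/eqP.
have h1 : (zval m.+1 x <= p ^ m.+1)%N by apply: ltnW; apply: zval_lt.
have h2 : (zval m x <= p ^ m)%N by apply: ltnW; apply: zval_lt.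
rewrite -(eqn_modDr (zval m.+1 x)) subnK // -modnDmr zval_mod // subnK //.
by rewrite expnS modnMl modnn.
Qed.

Lemma zval_zp0 n : zval n (zp0 p) = 0%N.
Proof. by rewrite /zval big1. Qed.

Lemma zval_small n (x : Defs.Zp p) : zval n x %% p ^ n = zval n x.
Proof. by rewrite modn_small // zval_lt. Qed.

Lemma zp_addA (x y z : Defs.Zp p) : zp_add x (zp_add y z) = zp_add (zp_add x y) z.
Proof.
apply: zval_ext => n; rewrite !zval_add.
by rewrite modnDmr modnDml addnA.
Qed.
Lemma zp_addC (x y : Defs.Zp p) : zp_add x y = zp_add y x.
Proof. by apply: zval_ext => n; rewrite !zval_add addnC. Qed.
Lemma zp_add0 (x : Defs.Zp p) : zp_add (zp0 p) x = x.
Proof. by apply: zval_ext => n; rewrite !zval_add zval_zp0 add0n zval_small. Qed.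
Lemma zp_addN (x : Defs.Zp p) : zp_add (zp_opp x) x = zp0 p.
Proof.
apply: zval_ext => n; rewrite zval_add zval_opp zval_zp0 modnDml subnK ?modnn //.
exact/ltnW/zval_lt.
Qed.
Lemma zp_mulDr (a x y : Defs.Zp p) : zp_mul a (zp_add x y) = zp_add (zp_mul a x) (zp_mul a y).
Proof.
apply: zval_ext => n; rewrite !zval_mul !zval_add.
by rewrite !(zval_mul, zval_add) modnMmr modnDm mulnDr.
Qed.
Lemma zp_mul0 (a : Defs.Zp p) : zp_mul a (zp0 p) = zp0 p.
Proof. by apply: zval_ext => n; rewrite zval_mul !zval_zp0 muln0 mod0n. Qed.
Lemma zp_pmulD j (x y : Defs.Zp p) : zp_pmul j (zp_add x y) = zp_add (zp_pmul j x) (zp_pmul j y).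
Proof.
apply: zval_ext => n; rewrite !(zval_pmul, zval_add).
by rewrite modnMmr modnDm mulnDr.
Qed.
Lemma zp_pmul_mul j (a x : Defs.Zp p) : zp_pmul j (zp_mul a x) = zp_mul a (zp_pmul j x).
Proof.
apply: zval_ext => n; rewrite !(zval_pmul, zval_mul).
by rewrite modnMmr modnMmr mulnCA.
Qed.
Lemma zp_pmulM i j (x : Defs.Zp p) : zp_pmul i (zp_pmul j x) = zp_pmul (i + j) x.
Proof.
apply: zval_ext => n; rewrite !zval_pmul.
by rewrite modnMmr mulnA expnD.
Qed.
Lemma zp_pmul0 (x : Defs.Zp p) : zp_pmul 0 x = x.
Proof. by apply: zval_ext => n; rewrite zval_pmul expn0 mul1n zval_small. Qed.
Lemma zp_pmul_zp0 j : zp_pmul j (zp0 p) = zp0 p.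
Proof. by apply: zval_ext => n; rewrite zval_pmul !zval_zp0 muln0 mod0n. Qed.

Lemma zp_add_inv (a b : Defs.Zp p) : zp_add a b = zp0 p -> a = zp_opp b.
Proof.
move=> h; rewrite -[a]zp_add0 -(zp_addN b) -zp_addA (zp_addC b) h.
by rewrite zp_addC zp_add0.
Qed.
Lemma zp_pmulN j (x : Defs.Zp p) : zp_pmul j (zp_opp x) = zp_opp (zp_pmul j x).
Proof. by apply: zp_add_inv; rewrite -zp_pmulD zp_addN zp_pmul_zp0. Qed.

Lemma zval_zero_low n (z : Defs.Zp p) : (forall i, (i < n)%N -> z i = ord0) -> zval n z = 0%N.
Proof.
move=> h; rewrite /zval big1 // => i _; by rewrite h.
Qed.

Lemma zval0_low n (z : Defs.Zp p) : zval n z = 0%N -> forall i, (i < n)%N -> z i = ord0.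
Proof.
move=> h i hi; apply: val_inj => /=.
have := zval_mod z hi; rewrite h mod0n zvalS => /eqP.
have hP : (p ^ i != 0)%N by rewrite -lt0n expp_gt0.
by rewrite eq_sym addn_eq0 muln_eq0 (negbTE hP) orbF => /andP [_ /eqP].
Qed.

Lemma zp_pmul_digit j (x : Defs.Zp p) i :
  zp_pmul j x i = if (i < j)%N then ord0 else x (i - j)%N.
Proof.
pose w : Defs.Zp p := fun i => if (i < j)%N then ord0 else x (i - j)%N.
suff -> : zp_pmul j x = w by [].
apply: zval_ext => n; rewrite zval_pmul.
have hw k : zval (j + k) w = (p ^ j * zval k x)%N.
  elim: k => [|k IH].
    rewrite addn0 zval0n muln0; apply: zval_zero_low => i0 hi0.
    by rewrite /w hi0.
  rewrite addnS zvalS IH zvalS /w ltnNge leq_addr /= addKn expnD; ring.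
case: (leqP j n) => hjn.
  rewrite -(subnK hjn) addnC hw expnD -muln_modr.
  by rewrite zval_mod // leq_addl.
rewrite (@zval_zero_low n w); last by move=> i0 hi0; rewrite /w (ltn_trans hi0 hjn).
by rewrite -(subnK (ltnW hjn)) expnD mulnAC modnMl.
Qed.

Local Notation Q := (Qp p).

Definition qval N (x : Q) : Defs.Zp p := zp_pmul (N - qk x) (qz x).

Lemma qval_digit N x i :
  qval N x i = if (i < N - qk x)%N then ord0 else qz x (i - (N - qk x)).
Proof. exact: zp_pmul_digit. Qed.

Lemma Qp_eq (x y : Q) : qk x = qk y -> qz x = qz y -> x = y.
Proof.
case: x => kx zx hx; case: y => ky zy hy /= hk hz; subst.
by rewrite (bool_irrelevance hx hy).
Qed.

Lemma qval_inj N (x y : Q) :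
  (qk x <= N)%N -> (qk y <= N)%N -> qval N x = qval N y -> x = y.
Proof.
wlog hxy : x y / (qk x <= qk y)%N.
  move=> W hx hy e; case: (leqP (qk x) (qk y)) => h; first exact: W.
  by symmetry; apply: W => //; apply: ltnW.
move=> hx hy e.
case: (ltnP (qk x) (qk y)) => h.
  have hy0 : qz y 0 != ord0.
    by case/orP: (qok y) => // /eqP hk; move: h; rewrite hk.
  have := congr1 (fun f => f (N - qk y)%N) e => /=.
  rewrite !qval_digit ltnn subnn.
  have -> : (N - qk y < N - qk x)%N by lia.
  by move=> e'; rewrite -e' eqxx in hy0.
have hk : qk x = qk y by apply/eqP; rewrite eqn_leq hxy h.
apply: Qp_eq => //; apply: funext => i.
have := congr1 (fun f => f (i + (N - qk x))%N) e => /=.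
by rewrite !qval_digit -hk ltnNge leq_addl /= addnK.
Qed.

Lemma lowdeg_le K (z : Defs.Zp p) : (lowdeg K z <= K)%N.
Proof.
by rewrite /lowdeg; have := find_size (fun i => z i != ord0) (iota 0 K); rewrite size_iota.
Qed.

Lemma lowdeg_zero K (z : Defs.Zp p) i : (i < lowdeg K z)%N -> z i = ord0.
Proof.
move=> h; have := @before_find _ 0%N (fun i => z i != ord0) (iota 0 K) i h.
rewrite nth_iota ?add0n; first by move/negbFE/eqP.
exact: leq_trans h (lowdeg_le K z).
Qed.

Lemma qk_normalize K (z : Defs.Zp p) : (qk (normalize K z) <= K)%N.
Proof. exact: leq_subr. Qed.

Lemma qval_normalize K (z : Defs.Zp p) : qval K (normalize K z) = z.
Proof.
rewrite /qval /= subKn ?lowdeg_le //; apply: funext => i.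
rewrite zp_pmul_digit /zp_shift.
by case: ifP => h; [rewrite (lowdeg_zero h) | rewrite subnK // leqNgt h].
Qed.

Lemma qval_up N M x : (qk x <= N)%N -> (N <= M)%N -> qval M x = zp_pmul (M - N) (qval N x).
Proof. by move=> h1 h2; rewrite /qval zp_pmulM; congr zp_pmul; lia. Qed.

Lemma qval_add N x y : (qk x <= N)%N -> (qk y <= N)%N ->
  qval N (qadd x y) = zp_add (qval N x) (qval N y).
Proof.
move=> hx hy; set K := maxn (qk x) (qk y).
have hK : (K <= N)%N by rewrite geq_max hx hy.
change (qval N (normalize K (zp_add (qval K x) (qval K y))) = zp_add (qval N x) (qval N y)).
rewrite (qval_up (N:=K)) ?qk_normalize // qval_normalize zp_pmulD.
by rewrite -!qval_up // ?leq_maxr ?leq_maxl.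
Qed.

Lemma qval_opp N x : (qk x <= N)%N -> qval N (qopp x) = zp_opp (qval N x).
Proof.
move=> hx; change (qval N (normalize (qk x) (zp_opp (qz x))) = zp_opp (qval N x)).
by rewrite (qval_up (N:=qk x)) ?qk_normalize // qval_normalize zp_pmulN.
Qed.

Lemma qval_scale N a x : (qk x <= N)%N -> qval N (qscale a x) = zp_mul a (qval N x).
Proof.
move=> hx; change (qval N (normalize (qk x) (zp_mul a (qz x))) = zp_mul a (qval N x)).
by rewrite (qval_up (N:=qk x)) ?qk_normalize // qval_normalize zp_pmul_mul.
Qed.

Lemma qk_q0 : qk (q0 p) = 0%N.
Proof. by rewrite /q0 /= sub0n. Qed.

Lemma qval_q0 N : qval N (q0 p) = zp0 p.
Proof. exact: zp_pmul_zp0. Qed.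

Lemma qk_add_le N (x y : Q) : (qk x <= N)%N -> (qk y <= N)%N -> (qk (qadd x y) <= N)%N.
Proof. by move=> hx hy; apply: leq_trans (qk_normalize _ _) _; rewrite geq_max hx hy. Qed.
Lemma qk_opp_le N (x : Q) : (qk x <= N)%N -> (qk (qopp x) <= N)%N.
Proof. by move=> hx; apply: leq_trans (qk_normalize _ _) _. Qed.
Lemma qk_scale_le N a (x : Q) : (qk x <= N)%N -> (qk (qscale a x) <= N)%N.
Proof. by move=> hx; apply: leq_trans (qk_normalize _ _) _. Qed.
Lemma qk_q0_le N : (qk (q0 p) <= N)%N.
Proof. by rewrite qk_q0. Qed.

Ltac bnd := repeat match goal with
  | |- is_true (qk (qadd _ _) <= _)%N => apply: qk_add_le
  | |- is_true (qk (qopp _) <= _)%N => apply: qk_opp_le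
  | |- is_true (qk (qscale _ _) <= _)%N => apply: qk_scale_le
  | |- is_true (qk (q0 _) <= _)%N => apply: qk_q0_le
  end; lia.

Lemma qaddA (x y z : Q) : qadd x (qadd y z) = qadd (qadd x y) z.
Proof.
apply: (@qval_inj (maxn (qk x) (maxn (qk y) (qk z)))); try bnd.
rewrite !qval_add; try bnd.
by rewrite zp_addA.
Qed.
Lemma qaddC (x y : Q) : qadd x y = qadd y x.
Proof.
apply: (@qval_inj (maxn (qk x) (qk y))); try bnd.
rewrite !qval_add; try bnd.
by rewrite zp_addC.
Qed.
Lemma qadd0 (x : Q) : qadd (q0 p) x = x.
Proof.
apply: (@qval_inj (qk x)); try bnd.
rewrite !qval_add; try bnd.
by rewrite qval_q0 zp_add0.
Qed.
Lemma qaddN (x : Q) : qadd (qopp x) x = q0 p.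
Proof.
apply: (@qval_inj (qk x)); try bnd.
rewrite qval_add; try bnd.
by rewrite qval_opp // qval_q0 zp_addN.
Qed.
Lemma qscaleD a (x y : Q) : qscale a (qadd x y) = qadd (qscale a x) (qscale a y).
Proof.
apply: (@qval_inj (maxn (qk x) (qk y))); try bnd.
rewrite qval_scale; try bnd.
rewrite !qval_add; try bnd.
by rewrite !qval_scale; try bnd; rewrite zp_mulDr.
Qed.
Lemma qscale0 a : qscale a (q0 p) = q0 p.
Proof.
apply: (@qval_inj 0); try bnd.
by rewrite qval_scale; try bnd; rewrite !qval_q0 zp_mul0.
Qed.

HB.instance Definition _ := gen_eqMixin Q.
HB.instance Definition _ := gen_choiceMixin Q.
HB.instance Definition _ := GRing.isZmodule.Build Q qaddA qaddC qadd0 qaddN.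

Lemma qaddE (x y : Q) : qadd x y = (x + y)%R. Proof. by []. Qed.
Lemma qoppE (x : Q) : qopp x = (- x)%R. Proof. by []. Qed.
Lemma q0E : q0 p = 0%R :> Q. Proof. by []. Qed.

Lemma qscaleN a (x : Q) : qscale a (qopp x) = qopp (qscale a x).
Proof.
apply/eqP; rewrite qoppE -GRing.addr_eq0 -qaddE -qscaleD qaddE GRing.addNr.
by rewrite -q0E qscale0.
Qed.

Lemma in_pnZpP n (x : Q) :
  in_pnZp n x <-> (qk x = 0%N /\ zval n (qval 0 x) = 0%N).
Proof.
rewrite /in_pnZp; split.
  case/andP => /eqP hk /forallP h; split => //.
  apply: zval_zero_low => i hi; rewrite qval_digit hk /= subn0.
  by rewrite subn0; apply/eqP; apply: (h (Ordinal hi)).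
case=> hk hz; rewrite hk eqxx /=; apply/forallP => i.
have e := zval0_low hz (ltn_ord i).
rewrite qval_digit hk /= !subn0 in e; by rewrite e.
Qed.

Lemma in_pn_add n (x y : Q) : in_pnZp n x -> in_pnZp n y -> in_pnZp n (qadd x y).
Proof.
move=> /in_pnZpP [hx zx] /in_pnZpP [hy zy]; apply/in_pnZpP.
have hk : qk (qadd x y) = 0%N by apply/eqP; rewrite -leqn0; bnd.
split => //; rewrite qval_add ?hx ?hy // zval_add zx zy.
by rewrite mod0n.
Qed.

Lemma in_pn_opp n (x : Q) : in_pnZp n x -> in_pnZp n (qopp x).
Proof.
move=> /in_pnZpP [hx zx]; apply/in_pnZpP.
have hk : qk (qopp x) = 0%N by apply/eqP; rewrite -leqn0; bnd.
split => //; rewrite qval_opp ?hx // zval_opp zx subn0.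
by rewrite modnn.
Qed.

Lemma in_pn0 n : in_pnZp n (q0 p).
Proof. by apply/in_pnZpP; rewrite qk_q0 qval_q0 zval_zp0. Qed.

Lemma in_pn_mono m n (x : Q) : (m <= n)%N -> in_pnZp n x -> in_pnZp m x.
Proof.
move=> hmn /andP [hk /forallP h]; rewrite /in_pnZp hk /=; apply/forallP => i.
exact: (h (widen_ord hmn i)).
Qed.

Lemma in_pn_inZp n (x : Q) : in_pnZp n x -> Defs.inZp x.
Proof. by case/andP. Qed.

Lemma inZp_pn0 (x : Q) : Defs.inZp x -> in_pnZp 0 x.
Proof. by rewrite /Defs.inZp /in_pnZp => ->; apply/forallP => -[]. Qed.

Lemma inZp_q0 : Defs.inZp (q0 p).
Proof. by rewrite /Defs.inZp qk_q0. Qed.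

Local Notation V := (QpX p X).

Lemma QpX_eq (x y : V) : (forall i, sval x i = sval y i) -> x = y.
Proof.
case: x => x hx; case: y => y hy /= h.
have e : x = y by apply: funext.
subst; congr exist; apply: Prop_irrelevance.
Qed.

Lemma vaddA' (x y z : V) : vadd x (vadd y z) = vadd (vadd x y) z.
Proof. by apply: QpX_eq => i /=; apply: qaddA. Qed.
Lemma vaddC' (x y : V) : vadd x y = vadd y x.
Proof. by apply: QpX_eq => i /=; apply: qaddC. Qed.
Lemma vadd0' (x : V) : vadd (v0 p X) x = x.
Proof. by apply: QpX_eq => i /=; apply: qadd0. Qed.
Lemma vaddN' (x : V) : vadd (vopp x) x = v0 p X.
Proof. by apply: QpX_eq => i /=; apply: qaddN. Qed.

HB.instance Definition _ := gen_eqMixin V.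
HB.instance Definition _ := gen_choiceMixin V.
HB.instance Definition _ := GRing.isZmodule.Build V vaddA' vaddC' vadd0' vaddN'.

Lemma vaddE (x y : V) : vadd x y = (x + y)%R. Proof. by []. Qed.
Lemma voppE (x : V) : vopp x = (- x)%R. Proof. by []. Qed.
Lemma v0E : v0 p X = 0%R :> V. Proof. by []. Qed.

Lemma vscaleD a (x y : V) : vscale a (x + y)%R = (vscale a x + vscale a y)%R.
Proof. by apply: QpX_eq => i /=; apply: qscaleD. Qed.
Lemma vscale0 a : vscale a (0%R : V) = 0%R.
Proof. by apply: QpX_eq => i /=; apply: qscale0. Qed.
Lemma vscaleN a (x : V) : vscale a (- x)%R = (- vscale a x)%R.
Proof. by apply: QpX_eq => i /=; apply: qscaleN. Qed.

Record Lin := MkLin { lfun : V -> V; lfunP : Zp_linear lfun }.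

Lemma Lin_eq (T S : Lin) : lfun T = lfun S -> T = S.
Proof.
case: T => T hT; case: S => S hS /= e; subst; congr MkLin; apply: Prop_irrelevance.
Qed.

Lemma lin_add (T : V -> V) : Zp_linear T -> forall x y, T (x + y)%R = (T x + T y)%R.
Proof. by case. Qed.
Lemma lin_scale (T : V -> V) : Zp_linear T -> forall a x, T (vscale a x) = vscale a (T x).
Proof. by case. Qed.
Lemma lin0 (T : V -> V) : Zp_linear T -> T 0%R = 0%R.
Proof.
move=> hT; have h := lin_add hT 0%R 0%R; rewrite GRing.addr0 in h.
by apply: (@GRing.addrI _ (T 0%R)); rewrite GRing.addr0 -h.
Qed.

Lemma opadd_lin (T S : V -> V) : Zp_linear T -> Zp_linear S -> Zp_linear (opadd T S).
Proof.
move=> hT hS; split => [x y|a x]; rewrite /opadd.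
  by rewrite (lin_add hT) (lin_add hS); exact: GRing.addrACA.
by rewrite (lin_scale hT) (lin_scale hS); exact: (esym (vscaleD _ _ _)).
Qed.
Lemma opmul_lin (T S : V -> V) : Zp_linear T -> Zp_linear S -> Zp_linear (opmul T S).
Proof.
move=> hT hS; split => [x y|a x]; rewrite /opmul.
  by rewrite (lin_add hS) (lin_add hT).
by rewrite (lin_scale hS) (lin_scale hT).
Qed.
Lemma op0_lin : Zp_linear (@op0 p X).
Proof.
split => [x y|a x]; rewrite /op0.
  by symmetry; exact: (GRing.addr0 (0%R : V)).
by symmetry; exact: vscale0.
Qed.
Lemma op1_lin : Zp_linear (@op1 p X).
Proof. by split. Qed.
Definition opopp (T : V -> V) : V -> V := fun x => vopp (T x).
Lemma opopp_lin (T : V -> V) : Zp_linear T -> Zp_linear (opopp T).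
Proof.
move=> hT; split => [x y|a x]; rewrite /opopp.
  by rewrite (lin_add hT); exact: GRing.opprD.
by rewrite (lin_scale hT); exact: (esym (vscaleN _ _)).
Qed.

Definition ladd (T S : Lin) := MkLin (opadd_lin (lfunP T) (lfunP S)).
Definition lmul (T S : Lin) := MkLin (opmul_lin (lfunP T) (lfunP S)).
Definition l0 := MkLin op0_lin.
Definition l1 := MkLin op1_lin.
Definition lopp (T : Lin) := MkLin (opopp_lin (lfunP T)).

Lemma laddA : associative ladd.
Proof. by move=> T S U; apply: Lin_eq; apply: funext => x /=; rewrite /opadd vaddA'. Qed.
Lemma laddC : commutative ladd.
Proof. by move=> T S; apply: Lin_eq; apply: funext => x /=; rewrite /opadd vaddC'. Qed.
Lemma ladd0 : left_id l0 ladd.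
Proof. by move=> T; apply: Lin_eq; apply: funext => x /=; rewrite /opadd /op0 vadd0'. Qed.
Lemma laddN : left_inverse l0 lopp ladd.
Proof. by move=> T; apply: Lin_eq; apply: funext => x /=; rewrite /opadd /opopp vaddN'. Qed.

HB.instance Definition _ := gen_eqMixin Lin.
HB.instance Definition _ := gen_choiceMixin Lin.
HB.instance Definition _ := GRing.isZmodule.Build Lin laddA laddC ladd0 laddN.

Lemma lmulA : associative lmul.
Proof. by move=> T S U; apply: Lin_eq. Qed.
Lemma lmul1 : left_id l1 lmul.
Proof. by move=> T; apply: Lin_eq. Qed.
Lemma lmulr1 : right_id l1 lmul.
Proof. by move=> T; apply: Lin_eq. Qed.
Lemma lmulDl : left_distributive lmul (@GRing.add Lin).
Proof. by move=> T S U; apply: Lin_eq. Qed.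
Lemma lmulDr : right_distributive lmul (@GRing.add Lin).
Proof.
move=> T S U; apply: Lin_eq; apply: funext => x /=.
by rewrite /opmul /opadd (lin_add (lfunP T)).
Qed.

HB.instance Definition _ := GRing.Zmodule_isPzRing.Build Lin lmulA lmul1 lmulr1 lmulDl lmulDr.

Lemma lfun_add (T S : Lin) : lfun (T + S)%R = opadd (lfun T) (lfun S). Proof. by []. Qed.
Lemma lfun_mul (T S : Lin) : lfun (T * S)%R = opmul (lfun T) (lfun S). Proof. by []. Qed.
Lemma lfun0 : lfun (0%R : Lin) = @op0 p X. Proof. by []. Qed.
Lemma lfun1 : lfun (1%R : Lin) = @op1 p X. Proof. by []. Qed.
Definition close (F : seq X) n (y x : V) : Prop :=
  forall i, i \in F -> in_pnZp n (qadd (sval y i) (qopp (sval x i))).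

Definition Pc (T : V -> V) : Prop :=
  forall s (x : V), inEP s x -> forall t, inEP t (T x) -> forall F n,
    exists F' n', forall y, inEP s y -> close F' n' y x ->
      inEP t (T y) /\ close F n (T y) (T x).

Lemma qsubrr (a : Q) : qadd a (qopp a) = q0 p.
Proof. exact: (GRing.subrr a). Qed.

Lemma close_refl F n (x : V) : close F n x x.
Proof. by move=> i _; rewrite qsubrr; apply: in_pn0. Qed.

Lemma close_mono F F' n n' (y x : V) :
  {subset F <= F'} -> (n <= n')%N -> close F' n' y x -> close F n y x.
Proof. by move=> hF hn h i hi; apply: in_pn_mono hn _; apply: h; apply: hF. Qed.

Lemma inEP_mono s s' (x : V) : {subset s <= s'} -> inEP s x -> inEP s' x.
Proof. by move=> hs h j hj; apply: h; apply: contra hj; apply: hs. Qed.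

Lemma bad_exists (x : V) : exists s, inEP s x.
Proof.
case: (svalP x) => s hs; exists s => j hj; apply/negPn; apply: contra hj; exact: hs.
Qed.

Lemma zsub_trans (W : zmodType) (a b c : W) : (a - c = (a - b) + (b - c))%R.
Proof. by rewrite GRing.addrA GRing.subrK. Qed.
Lemma zsub_add (W : zmodType) (a b c d : W) : ((a + c) - (b + d) = (a - b) + (c - d))%R.
Proof. by rewrite GRing.opprD GRing.addrACA. Qed.

Lemma qsub_trans (a b c : Q) :
  qadd a (qopp c) = qadd (qadd a (qopp b)) (qadd b (qopp c)).
Proof. exact: (zsub_trans a b c). Qed.

Lemma qsub_inZp (a b : Q) : Defs.inZp (qadd a (qopp b)) -> Defs.inZp b -> Defs.inZp a.
Proof.
move=> h1 h2; have -> : a = qadd (qadd a (qopp b)) b by symmetry; exact: (GRing.subrK b a).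
exact: inZp_qadd.
Qed.

Lemma qsub_add (a b c d : Q) :
  qadd (qadd a c) (qopp (qadd b d)) = qadd (qadd a (qopp b)) (qadd c (qopp d)).
Proof. exact: (zsub_add a b c d). Qed.

Lemma W_open t F n (c : V) : tau_open (fun v => inEP t v /\ close F n v c).
Proof.
move=> r v hv [hvt hvc]; exists (F ++ r), n => y hy hc; split.
  move=> j hj; case: (boolP (j \in r)) => hjr; last exact: hy.
  apply: (qsub_inZp (b := sval v j)); last exact: hvt.
  by apply: (in_pn_inZp (n := n)); apply: hc; rewrite mem_cat hjr orbT.
move=> i hi; rewrite (qsub_trans _ (sval v i)); apply: in_pn_add; last exact: hvc.
by apply: hc; rewrite mem_cat hi.
Qed.

Lemma Pc_cont (T : V -> V) : Pc T -> tau_continuous T.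
Proof.
move=> hT A hA s x hx hAx.
case: (bad_exists (T x)) => t ht.
case: (hA t (T x) ht hAx) => F [n hF].
case: (hT s x hx t ht F n) => F' [n' h].
exists F', n' => y hy hc; case: (h y hy hc) => h1 h2; exact: hF.
Qed.

Lemma cont_Pc (T : V -> V) : tau_continuous T -> Pc T.
Proof.
move=> hT s x hx t ht F n.
have := hT _ (@W_open t F n (T x)) s x hx (conj ht (@close_refl F n (T x))).
case=> F' [n' h]; by exists F', n'.
Qed.

Lemma Pc_add (T S : V -> V) : Pc T -> Pc S -> Pc (opadd T S).
Proof.
move=> hT hS s x hx t ht F n.
case: (bad_exists (T x)) => tT htT; case: (bad_exists (S x)) => tS htS.
case: (hT s x hx tT htT (F ++ tT ++ tS) n) => F1 [n1 h1].
case: (hS s x hx tS htS (F ++ tT ++ tS) n) => F2 [n2 h2].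
exists (F1 ++ F2), (maxn n1 n2) => y hy hc.
have c1 : close F1 n1 y x.
  by apply: close_mono hc => [i hi|]; [rewrite mem_cat hi|rewrite leq_maxl].
have c2 : close F2 n2 y x.
  by apply: close_mono hc => [i hi|]; [rewrite mem_cat hi orbT|rewrite leq_maxr].
case: (h1 y hy c1) => e1 d1; case: (h2 y hy c2) => e2 d2.
have dd : close (F ++ tT ++ tS) n (opadd T S y) (opadd T S x).
  move=> i hi; rewrite /opadd /= qsub_add; apply: in_pn_add; [exact: d1|exact: d2].
split; last by apply: close_mono dd => // i hi; rewrite mem_cat hi.
move=> j hj; case: (boolP (j \in tT ++ tS)) => hjt.
  apply: (qsub_inZp (b := sval (opadd T S x) j)); last exact: ht.
  by apply: (in_pn_inZp (n := n)); apply: dd; rewrite mem_cat hjt orbT.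
rewrite mem_cat negb_or in hjt; case/andP: hjt => j1 j2.
by rewrite /opadd /=; apply: inZp_qadd; [apply: e1|apply: e2].
Qed.

Lemma inB1_add (T S : V -> V) : inB1 T -> inB1 S -> inB1 (opadd T S).
Proof.
move=> [[lT cT] nT] [[lS cS] nS]; split; first split.
- exact: opadd_lin.
- by apply: Pc_cont; apply: Pc_add; apply: cont_Pc.
- move=> x hx i; rewrite /opadd /=; apply: inZp_qadd; [exact: nT|exact: nS].
Qed.

Lemma inB1_mul (T S : V -> V) : inB1 T -> inB1 S -> inB1 (opmul T S).
Proof.
move=> [[lT cT] nT] [[lS cS] nS]; split; first split.
- exact: opmul_lin.
- by move=> A hA; exact: (cS _ (cT _ hA)).
- by move=> x hx; apply: nT; apply: nS.
Qed.

Lemma inB1_0 : inB1 (@op0 p X).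
Proof.
split; first split.
- exact: op0_lin.
- by move=> A hA s x hx hAx; exists [::], 0%N.
- by move=> x hx i; apply: inZp_q0.
Qed.

Lemma inB1_1 : inB1 (@op1 p X).
Proof.
split; first split.
- exact: op1_lin.
- by move=> A hA.
- by [].
Qed.
Variable f : X -> nat.
Variable g : nat -> X.
Hypothesis fK : cancel f g.
Hypothesis gK : cancel g f.

Definition pr (k j : nat) : nat := Cantor.to_nat (k, j).
Definition blkof (x : X) : nat := (Cantor.of_nat (f x)).1.
Definition posof (x : X) : nat := (Cantor.of_nat (f x)).2.
Arguments pr : simpl never.
Arguments blkof : simpl never.
Arguments posof : simpl never.

Lemma blkof_pr k j : blkof (g (pr k j)) = k.
Proof. by rewrite /blkof /pr gK Cantor.cancel_of_to. Qed.
Lemma posof_pr k j : posof (g (pr k j)) = j.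
Proof. by rewrite /posof /pr gK Cantor.cancel_of_to. Qed.
Lemma pr_of x : g (pr (blkof x) (posof x)) = x.
Proof. by rewrite /pr /blkof /posof -surjective_pairing Cantor.cancel_to_of fK. Qed.
Lemma pr_inj k j k' j' : g (pr k j) = g (pr k' j') -> k = k' /\ j = j'.
Proof.
move=> e; split; first by rewrite -(blkof_pr k j) e blkof_pr.
by rewrite -(posof_pr k j) e posof_pr.
Qed.

Definition Rfun (tau : X -> option X) (v : V) : X -> Q :=
  fun x => if tau x is Some y then sval v y else q0 p.

Lemma Rfun_ok tau rho (h : forall x y, tau x = Some y -> x = rho y) (v : V) :
  isQpX (Rfun tau v).
Proof.
case: (svalP v) => s hs; exists (map rho s) => x; rewrite /Rfun.
case e: (tau x) => [y|]; last by rewrite inZp_q0.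
by move=> hy; rewrite (h _ _ e); apply: map_f; apply: hs.
Qed.

Definition Rmap tau rho h (v : V) : V := exist _ (Rfun tau v) (@Rfun_ok tau rho h v).

Lemma Rmap_val tau rho h v x : sval (@Rmap tau rho h v) x = Rfun tau v x.
Proof. by []. Qed.

Lemma Rmap_B1 tau rho h : inB1 (@Rmap tau rho h).
Proof.
split; first split; first split.
- move=> x y; apply: QpX_eq => i /=; rewrite /Rfun.
  by case: (tau i) => // ; rewrite qadd0.
- move=> a x; apply: QpX_eq => i /=; rewrite /Rfun.
  by case: (tau i) => //; rewrite qscale0.
- apply: Pc_cont => s x hx t ht F n.
  exists (pmap tau F ++ s), n => y hy hc; split.
    move=> j hj; have := ht j hj; rewrite /= /Rfun.
    case e: (tau j) => [k|] // hk.
    case: (boolP (k \in s)) => hks; last exact: hy.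
    apply: (qsub_inZp (b := sval x k)) => //.
    by apply: (in_pn_inZp (n := n)); apply: hc; rewrite mem_cat hks orbT.
  move=> i hi; rewrite /= /Rfun; case e: (tau i) => [k|]; last by rewrite qsubrr in_pn0.
  by apply: hc; rewrite mem_cat mem_pmap -e map_f.
- move=> x hx i; rewrite /= /Rfun; case: (tau i) => [k|]; [exact: hx|exact: inZp_q0].
Qed.

Definition tau_blk k (x : X) : option X := Some (g (pr k (f x))).
Lemma tau_blk_ok k x y : tau_blk k x = Some y -> x = g (posof y).
Proof. by case=> <-; rewrite posof_pr fK. Qed.
Definition blk k := Rmap (@tau_blk_ok k).

Definition tau_a1 (x : X) : option X := Some (g (pr (blkof x).+1 (posof x))).
Lemma tau_a1_ok x y : tau_a1 x = Some y -> x = g (pr (blkof y).-1 (posof y)).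
Proof. by case=> <-; rewrite blkof_pr posof_pr /= pr_of. Qed.
Definition a1 := Rmap tau_a1_ok.

Definition tau_b0 (x : X) : option X := if blkof x == 0%N then Some (g (posof x)) else None.
Lemma tau_b0_ok x y : tau_b0 x = Some y -> x = g (pr 0 (f y)).
Proof.
rewrite /tau_b0; case: eqP => // h0 [<-]; by rewrite gK -h0 pr_of.
Qed.
Definition b0 := Rmap tau_b0_ok.

Definition tau_b1 (x : X) : option X :=
  if blkof x == 0%N then None else Some (g (pr (blkof x).-1 (posof x))).
Lemma tau_b1_ok x y : tau_b1 x = Some y -> x = g (pr (blkof y).+1 (posof y)).
Proof.
rewrite /tau_b1; case: eqP => // h0 [<-]; rewrite blkof_pr posof_pr prednK ?pr_of //.
by rewrite lt0n; apply/eqP.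
Qed.
Definition b1 := Rmap tau_b1_ok.

Definition a0 := blk 0.

Lemma qadd0r (x : Q) : qadd x (q0 p) = x.
Proof. exact: (GRing.addr0 x). Qed.

Lemma a0b0 : opmul a0 b0 = @op1 p X.
Proof.
apply: funext => v; apply: QpX_eq => x.
rewrite /opmul /op1 /a0 /b0 /blk !Rmap_val /Rfun /tau_blk !Rmap_val /Rfun /tau_b0.
by rewrite blkof_pr eqxx posof_pr fK.
Qed.

Lemma a1b1 : opmul a1 b1 = @op1 p X.
Proof.
apply: funext => v; apply: QpX_eq => x.
rewrite /opmul /op1 /a1 /b1 !Rmap_val /Rfun /tau_a1 !Rmap_val /Rfun /tau_b1.
by rewrite blkof_pr posof_pr /= pr_of.
Qed.

Lemma b0a0b1a1 : opadd (opmul b0 a0) (opmul b1 a1) = @op1 p X.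
Proof.
apply: funext => v; apply: QpX_eq => x.
rewrite /opadd /opmul /op1 /= /Rfun /tau_b0 /tau_b1.
case: eqP => h0.
  by rewrite qadd0r /a0 /blk Rmap_val /Rfun /tau_blk gK -h0 pr_of.
rewrite qadd0 /a1 Rmap_val /Rfun /tau_a1 blkof_pr posof_pr prednK ?pr_of //.
by rewrite lt0n; apply/eqP.
Qed.
Lemma blk_val k (v : V) y : sval (blk k v) y = sval v (g (pr k (f y))).
Proof. by []. Qed.
Lemma blk_B1 k : inB1 (blk k).
Proof. exact: Rmap_B1. Qed.

Lemma blk_norm s (v : V) k : inEP s v -> k \notin map blkof s -> vnorm_le1 (blk k v).
Proof.
move=> hv hk y; rewrite blk_val; apply: hv; apply: contra hk => hs.
by rewrite -(blkof_pr k (f y)); apply: map_f.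
Qed.

Lemma blk_EP s (v : V) k : inEP s v -> inEP (map (fun z => g (posof z)) s) (blk k v).
Proof.
move=> hv y hy; rewrite blk_val; apply: hv; apply: contra hy => hs.
by apply/mapP; exists (g (pr k (f y))) => //; rewrite posof_pr fK.
Qed.

Lemma fin_choice (P : nat -> seq X -> Prop) :
  (forall k t t', {subset t <= t'} -> P k t -> P k t') ->
  (forall k, exists t, P k t) -> forall K : seq nat, exists t, forall k, k \in K -> P k t.
Proof.
move=> mono hex; elim=> [|k K [t ht]]; first by exists [::].
case: (hex k) => t1 h1; exists (t ++ t1) => k'; rewrite in_cons => /orP [/eqP -> | hk].
  by apply: mono h1 => i hi; rewrite mem_cat hi orbT.
by apply: mono (ht k' hk) => i hi; rewrite mem_cat hi.
Qed.

Lemma fin_choice2 (P : nat -> seq X -> nat -> Prop) :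
  (forall k F F' n n', {subset F <= F'} -> (n <= n')%N -> P k F n -> P k F' n') ->
  (forall k, exists F n, P k F n) -> forall K : seq nat, exists F n, forall k, k \in K -> P k F n.
Proof.
move=> mono hex; elim=> [|k K [F [n hF]]]; first by exists [::], 0%N.
case: (hex k) => F1 [n1 h1]; exists (F ++ F1), (maxn n n1) => k'.
rewrite in_cons => /orP [/eqP -> | hk].
  by apply: mono h1; [move=> i hi; rewrite mem_cat hi orbT | rewrite leq_maxr].
by apply: mono (hF k' hk); [move=> i hi; rewrite mem_cat hi | rewrite leq_maxl].
Qed.

Definition inf_fun (a : V -> V) (v : V) : X -> Q :=
  fun x => sval (a (blk (blkof x) v)) (g (posof x)).

Lemma inf_ok a (ha : opnorm_le1 a) (v : V) : isQpX (inf_fun a v).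
Proof.
case: (bad_exists v) => s hs.
have [t ht] : exists t, forall k, k \in map blkof s -> inEP t (a (blk k v)).
  apply: (fin_choice (P := fun k t => inEP t (a (blk k v)))).
  - by move=> k t t' sub; apply: inEP_mono.
  - by move=> k; apply: bad_exists.
exists [seq g (pr k (f y)) | k <- map blkof s, y <- t] => x hx.
case: (boolP (blkof x \in map blkof s)) => hk.
  have hy : g (posof x) \in t.
    by apply/negPn; apply: contra hx => hn; apply: (ht _ hk).
  have -> : x = g (pr (blkof x) (f (g (posof x)))) by rewrite gK pr_of.
  exact: (allpairs_f (fun k y => g (pr k (f y))) hk hy).
by rewrite /inf_fun (ha _ (blk_norm hs hk) (g (posof x))) in hx.
Qed.

Definition infraw a (ha : opnorm_le1 a) (v : V) : V := exist _ (inf_fun a v) (inf_ok ha v).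

Definition inf (a : V -> V) : V -> V :=
  match pselect (opnorm_le1 a) with left ha => infraw ha | right _ => @op0 p X end.

Lemma inf_val a (ha : opnorm_le1 a) v x : sval (inf a v) x = inf_fun a v x.
Proof. by rewrite /inf; case: pselect => [h'|hn] //; case: (hn ha). Qed.

Lemma inf_B1 a : inB1 a -> inB1 (inf a).
Proof.
move=> [[la ca] na].
have lb k : Zp_linear (blk k) by case: (blk_B1 k) => -[].
split; first split; first split.
- move=> x y; apply: QpX_eq => i; rewrite [RHS]/= !(inf_val na) /inf_fun.
  by rewrite (lin_add (lb _)) (lin_add la).
- move=> c x; apply: QpX_eq => i; rewrite [RHS]/= !(inf_val na) /inf_fun.
  by rewrite (lin_scale (lb _)) (lin_scale la).
- have Pa := cont_Pc ca.
  apply: Pc_cont => s x hx t ht F n.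
  pose sall := map (fun z => g (posof z)) s.
  pose Fall := map (fun z => g (posof z)) F.
  pose tk k := [seq g (posof z) | z <- [seq z <- t | blkof z == k]].
  pose K := map blkof s ++ map blkof F.
  have htk k : inEP (tk k) (a (blk k x)).
    move=> y hy; have := ht (g (pr k (f y))).
    rewrite (inf_val na) /inf_fun blkof_pr posof_pr fK; apply.
    apply: contra hy => hin; apply/mapP; exists (g (pr k (f y))).
      by rewrite mem_filter blkof_pr eqxx.
    by rewrite posof_pr fK.
  have [F0 [n0 hF0]] : exists F0 n0, forall k, k \in K -> forall z, inEP sall z ->
      close F0 n0 z (blk k x) -> inEP (tk k) (a z) /\ close Fall n (a z) (a (blk k x)).
    apply: (fin_choice2 (P := fun k F0 n0 => forall z, inEP sall z ->
      close F0 n0 z (blk k x) -> inEP (tk k) (a z) /\ close Fall n (a z) (a (blk k x)))).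
    - move=> k F1 F2 n1 n2 hsub hn h z hz hc; apply: h => //.
      exact: close_mono hc.
    - move=> k; exact: (Pa sall (blk k x) (blk_EP k hx) (tk k) (htk k) Fall n).
  exists [seq g (pr k (f y)) | k <- K, y <- F0], n0 => y hy hc.
  have hcb k : k \in K -> close F0 n0 (blk k y) (blk k x).
    move=> hk i hi; rewrite !blk_val; apply: hc.
    exact: (allpairs_f (fun k y => g (pr k (f y))) hk hi).
  have hyb k : k \in K -> inEP (tk k) (a (blk k y)) /\ close Fall n (a (blk k y)) (a (blk k x)).
    move=> hk; apply: (hF0 k hk); [exact: blk_EP | exact: hcb].
  split.
    move=> x' hx'; rewrite (inf_val na) /inf_fun.
    case: (boolP (blkof x' \in map blkof s)) => hk.
      have hK : blkof x' \in K by rewrite mem_cat hk.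
      have [h1 _] := hyb _ hK.
      apply: h1; apply: contra hx' => /mapP [z]; rewrite mem_filter => /andP [/eqP hz hzt] e.
      have ep : posof x' = posof z by rewrite -(gK (posof x')) e gK.
      have -> : x' = z by rewrite -(pr_of x') -(pr_of z) hz ep.
      exact: hzt.
    exact: (na _ (blk_norm hy hk)).
  move=> i hi; rewrite !(inf_val na) /inf_fun.
  have hk : blkof i \in K by rewrite mem_cat (map_f blkof hi) orbT.
  have [_ h2] := hyb _ hk; apply: h2.
  exact: (map_f (fun z => g (posof z)) hi).
- move=> v hv i; rewrite (inf_val na) /inf_fun; apply: na => y; rewrite blk_val; exact: hv.
Qed.

Lemma inf1 : inf (@op1 p X) = @op1 p X.
Proof.
have h1 : opnorm_le1 (@op1 p X) by [].
apply: funext => v; apply: QpX_eq => x.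
by rewrite (inf_val h1) /inf_fun /op1 blk_val gK pr_of.
Qed.

Lemma infD a b : opnorm_le1 a -> opnorm_le1 b -> inf (opadd a b) = opadd (inf a) (inf b).
Proof.
move=> ha hb.
have hab : opnorm_le1 (opadd a b).
  by move=> v hv i; apply: inZp_qadd; [apply: ha|apply: hb].
apply: funext => v; apply: QpX_eq => x.
by rewrite [RHS]/= (inf_val hab) (inf_val ha) (inf_val hb) /inf_fun.
Qed.

Lemma blk_inf k b (hb : opnorm_le1 b) (v : V) : blk k (inf b v) = b (blk k v).
Proof.
apply: QpX_eq => y.
by rewrite blk_val (inf_val hb) /inf_fun blkof_pr posof_pr fK.
Qed.

Lemma infM a b : opnorm_le1 a -> opnorm_le1 b -> inf (opmul a b) = opmul (inf a) (inf b).
Proof.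
move=> ha hb.
have hab : opnorm_le1 (opmul a b) by move=> v hv; apply: ha; apply: hb.
apply: funext => v; apply: QpX_eq => x.
by rewrite /opmul (inf_val hab) (inf_val ha) /inf_fun blk_inf.
Qed.

Lemma blk_a1 k (v : V) : blk k (a1 v) = blk k.+1 v.
Proof.
apply: QpX_eq => y.
by rewrite !blk_val /a1 Rmap_val /Rfun /tau_a1 blkof_pr posof_pr.
Qed.

Lemma inf_box a : opnorm_le1 a -> boxplus a0 b0 a1 b1 a (inf a) = inf a.
Proof.
move=> ha; apply: funext => v; apply: QpX_eq => x.
rewrite /boxplus /opadd /opmul /= /Rfun /tau_b0 /tau_b1.
case: eqP => h0.
  by rewrite qadd0r (inf_val ha) /inf_fun h0.
rewrite qadd0 !(inf_val ha) /inf_fun blkof_pr posof_pr blk_a1 prednK //.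
by rewrite lt0n; apply/eqP.
Qed.

Lemma sum_ring : B1_infinite_sum_ring p X.
Proof.
exists a0, b0, a1, b1; split; first by split; apply: Rmap_B1.
split; first by split; [exact: a0b0 | exact: a1b1 | exact: b0a0b1a1].
exists inf; split; first exact: inf_B1.
split; first exact: inf1.
split; first by move=> a b [_ ha] [_ hb]; exact: infD.
split; first by move=> a b [_ ha] [_ hb]; exact: infM.
by move=> a [_ ha]; exact: inf_box.
Qed.
Definition toL (T : V -> V) : Lin :=
  match pselect (Zp_linear T) with left h => MkLin h | right _ => 0%R end.

Lemma toLK (T : V -> V) : Zp_linear T -> lfun (toL T) = T.
Proof. by rewrite /toL; case: pselect => // h' h; case: (h' h). Qed.

Lemma B1_lin (T : V -> V) : inB1 T -> Zp_linear T.
Proof. by case=> -[]. Qed.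

Definition good (x : Lin) := inB1 (lfun x).

Lemma a0b1 : opmul a0 b1 = @op0 p X.
Proof.
apply: funext => v; apply: QpX_eq => x.
by rewrite /opmul /op0 /a0 /blk /b1 !Rmap_val /Rfun /tau_blk !Rmap_val /Rfun /tau_b1 blkof_pr eqxx.
Qed.

Lemma a1b0 : opmul a1 b0 = @op0 p X.
Proof.
apply: funext => v; apply: QpX_eq => x.
by rewrite /opmul /op0 /a1 /b0 !Rmap_val /Rfun /tau_a1 !Rmap_val /Rfun /tau_b0 blkof_pr.
Qed.

Lemma inf0 : inf (@op0 p X) = @op0 p X.
Proof.
have h0 : opnorm_le1 (@op0 p X) by move=> v _ i; exact: inZp_q0.
by apply: funext => v; apply: QpX_eq => x; rewrite (inf_val h0).
Qed.

Definition La0 := toL a0.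
Definition Lb0 := toL b0.
Definition La1 := toL a1.
Definition Lb1 := toL b1.
Definition linf (x : Lin) := toL (inf (lfun x)).

Lemma lfunLa0 : lfun La0 = a0. Proof. exact/toLK/B1_lin/Rmap_B1. Qed.
Lemma lfunLb0 : lfun Lb0 = b0. Proof. exact/toLK/B1_lin/Rmap_B1. Qed.
Lemma lfunLa1 : lfun La1 = a1. Proof. exact/toLK/B1_lin/Rmap_B1. Qed.
Lemma lfunLb1 : lfun Lb1 = b1. Proof. exact/toLK/B1_lin/Rmap_B1. Qed.
Lemma lfun_linf x : good x -> lfun (linf x) = inf (lfun x).
Proof. by move=> gx; apply/toLK/B1_lin/inf_B1. Qed.

Lemma norm_of (T : V -> V) : inB1 T -> opnorm_le1 T. Proof. by case. Qed.

Lemma lfun_sum (I : Type) (r : seq I) (F : I -> Lin) :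
  lfun (\sum_(l <- r) F l)%R = foldr (@opadd p X) (@op0 p X) [seq lfun (F l) | l <- r].
Proof.
elim: r => [|l r IH]; first by rewrite big_nil.
by rewrite big_cons lfun_add IH.
Qed.

Lemma liftM_mul a b c (A : 'M[Lin]_(a, b)) (B : 'M[Lin]_(b, c)) :
  mx_mul (map_mx lfun A) (map_mx lfun B) = map_mx lfun (A *m B)%R.
Proof.
apply/matrixP => i j; rewrite /mx_mul !mxE lfun_sum.
rewrite [index_enum _]unlock -enumT.
by congr foldr; apply: eq_map => l; rewrite !mxE.
Qed.

Lemma liftM_inj a b (A B : 'M[Lin]_(a, b)) : map_mx lfun A = map_mx lfun B -> A = B.
Proof.
move=> e; apply/matrixP => i j; apply: Lin_eq.
by have := congr1 (fun M : 'M[V -> V]_(a, b) => M i j) e; rewrite !mxE.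
Qed.

Lemma liftM_dsum a b (x : 'M[Lin]_a) (y : 'M[Lin]_b) :
  map_mx lfun (dsum x y) = mx_dsum (map_mx lfun x) (map_mx lfun y).
Proof.
rewrite /dsum /mx_dsum map_block_mx; congr block_mx; apply/matrixP => i j; by rewrite !mxE.
Qed.

Lemma K0_trivial : B1_K0_trivial p X.
Proof.
have good0 : good 0%R by exact: inB1_0.
have good_add : forall x y, good x -> good y -> good (x + y)%R.
  by move=> x y; exact: inB1_add.
have good_mul : forall x y, good x -> good y -> good (x * y)%R.
  by move=> x y; exact: inB1_mul.
have ga0 : good La0 by rewrite /good lfunLa0; apply: Rmap_B1.
have gb0 : good Lb0 by rewrite /good lfunLb0; apply: Rmap_B1.
have ga1 : good La1 by rewrite /good lfunLa1; apply: Rmap_B1.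
have gb1 : good Lb1 by rewrite /good lfunLb1; apply: Rmap_B1.
have h00 : (La0 * Lb0 = 1)%R by apply: Lin_eq; rewrite lfun_mul lfunLa0 lfunLb0 a0b0.
have h11 : (La1 * Lb1 = 1)%R by apply: Lin_eq; rewrite lfun_mul lfunLa1 lfunLb1 a1b1.
have h01 : (La0 * Lb1 = 0)%R by apply: Lin_eq; rewrite lfun_mul lfunLa0 lfunLb1 a0b1.
have h10 : (La1 * Lb0 = 0)%R by apply: Lin_eq; rewrite lfun_mul lfunLa1 lfunLb0 a1b0.
have ginf : forall x, good x -> good (linf x).
  by move=> x gx; rewrite /good lfun_linf //; apply: inf_B1.
have linf0 : linf 0%R = 0%R.
  by apply: Lin_eq; rewrite lfun_linf // lfun0 inf0.
have linfD : forall x y, good x -> good y -> linf (x + y)%R = (linf x + linf y)%R.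
  move=> x y gx gy; apply: Lin_eq; rewrite lfun_add !lfun_linf //; last exact: good_add.
  by rewrite lfun_add infD //; apply: norm_of.
have linfM : forall x y, good x -> good y -> linf (x * y)%R = (linf x * linf y)%R.
  move=> x y gx gy; apply: Lin_eq; rewrite lfun_mul !lfun_linf //; last exact: good_mul.
  by rewrite lfun_mul infM //; apply: norm_of.
have linf_box : forall x, good x -> (Lb0 * (x * La0) + Lb1 * (linf x * La1))%R = linf x.
  move=> x gx; apply: Lin_eq; rewrite lfun_add !lfun_mul lfun_linf // lfunLa0 lfunLb0 lfunLa1 lfunLb1.
  exact: (inf_box (norm_of gx)).
move=> n m e1 f1 ge he gf hf.
pose eL := map_mx toL e1; pose fL := map_mx toL f1.
have eK : map_mx lfun eL = e1.
  by apply/matrixP => i j; rewrite !mxE toLK //; apply/B1_lin/ge.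
have fK' : map_mx lfun fL = f1.
  by apply/matrixP => i j; rewrite !mxE toLK //; apply/B1_lin/gf.
have geL : allgood good eL.
  by move=> i j; rewrite /good mxE toLK; [apply: ge | apply/B1_lin/ge].
have gfL : allgood good fL.
  by move=> i j; rewrite /good mxE toLK; [apply: gf | apply/B1_lin/gf].
have heL : idem eL by apply: liftM_inj; rewrite -liftM_mul eK; exact: he.
have hfL : idem fL by apply: liftM_inj; rewrite -liftM_mul fK'; exact: hf.
have [k [G [gG hG [al [be [gal gbe e3 e4]]]]]] :=
  K0_generic good0 good_add good_mul ga0 gb0 ga1 gb1 h00 h11 h01 h10 ginf linf0
    linfD linfM linf_box geL heL gfL hfL.
exists k, (map_mx lfun G); split.
  by move=> i j; rewrite mxE; exact: gG.
split; first by rewrite /mx_idem liftM_mul hG.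
exists (map_mx lfun al), (map_mx lfun be); split.
  by move=> i j; rewrite mxE; exact: gal.
split; first by move=> i j; rewrite mxE; exact: gbe.
by split; rewrite liftM_mul ?e3 ?e4 liftM_dsum ?eK ?fK'.
Qed.
End Main.

Theorem lemma3p11 (p : nat) (hp : prime p) (X : eqType)
  (hX : exists f : X -> nat, bijective f) :
  B1_infinite_sum_ring p X /\ B1_K0_trivial p X.
Proof.
case: hX => f [g fK gK]; have p_gt1 := prime_gt1 hp.
split; [exact: (sum_ring p_gt1 fK gK) | exact: (K0_trivial p_gt1 fK gK)].
Qed.
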